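(* Let $n\ge2$ and $\mathbf{F}\in\mathbb{R}^n$ with $F_k>0$ for all $k$ and $F_k\ge F_{k+1}$ for $3\le k\le n-1$. Let $U_i=\frac{i}{3/F_1+\sum_{k=2}^i1/F_k}$ and $V_i=\frac{i-1}{\sum_{k=1}^i1/F_k}$ for $2\le i\le n$; let $u$ be the least index in $\arg\max_{2\le i\le n}U_i$ and $v$ the least index in $\arg\max_{2\le i\le n}V_i$. Assume $U_u\ge V_v$. Define $\boldsymbol\mu\in\mathbb{R}^n$ by $\mu_1=\frac12-\frac{U_u}{F_1}$, $\mu_k=1-\frac{U_u}{F_k}$ for $3\le k\le u$, and $\mu_k=0$ otherwise. Then: (1) $\mu_k\ge0$ for all $1\le k\le n$; (2) $F_1(\frac12-\mu_1)=F_2\big(\frac12+3\mu_1+\sum_{i=3}^u\mu_i\big)=F_k(1-\mu_k)=U_u$ for all $3\le k\le u$; (3) $F_k\le U_u$ for all $u+1\le k\le n$.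
   Context: Note $U_u=\frac{u}{3/F_1+\sum_{k=2}^u1/F_k}$. *)

(* Defs.v *)
(* Vectors F in R^n are represented 1-based as F : nat -> R;
   only the values F 1, ..., F n matter. *)
From mathcomp Require Import all_boot all_order all_algebra.
Set Implicit Arguments. Unset Strict Implicit. Unset Printing Implicit Defensive.
Import Order.TTheory GRing.Theory Num.Theory.
Local Open Scope ring_scope.

Definition Useq (R : realFieldType) (F : nat -> R) (i : nat) : R :=
  i%:R / (3 / F 1%N + \sum_(2 <= k < i.+1) (F k)^-1).

Definition Vseq (R : realFieldType) (F : nat -> R) (i : nat) : R :=
  (i.-1)%:R / (\sum_(1 <= k < i.+1) (F k)^-1).

Definition least_argmax (R : realFieldType) (f : nat -> R) (n u : nat) : Prop :=
  [/\ (2 <= u <= n)%N,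
      (forall i, (2 <= i <= n)%N -> f i <= f u) &
      (forall i, (2 <= i < u)%N -> f i < f u)].

Definition mu (R : realFieldType) (F : nat -> R) (u k : nat) : R :=
  if k == 1%N then 1 / 2 - Useq F u / F 1%N
  else if (3 <= k <= u)%N then 1 - Useq F u / F k
  else 0.

(* Main.v *)
Require Import Defs.
From mathcomp Require Import all_boot all_order all_algebra.
From mathcomp Require Import ring lra.
Import Order.TTheory GRing.Theory Num.Theory.
Local Open Scope ring_scope.

Set Implicit Arguments.
Section H.
Variable R : realFieldType.
Variable F : nat -> R.
Variable n : nat.
Hypothesis Fpos : forall k, (1 <= k <= n)%N -> 0 < F k.

Definition S (i : nat) : R := 3 / F 1%N + \sum_(2 <= k < i.+1) (F k)^-1.

Lemma sum_ge0 m i : (i <= n)%N -> (1 <= m)%N -> 0 <= \sum_(m <= k < i.+1) (F k)^-1.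
Proof.
move=> hi hm; rewrite big_seq_cond; apply: sumr_ge0 => k /andP[]; rewrite mem_index_iota.
move=> /andP[h1 h2] _; rewrite invr_ge0 ltW // Fpos //.
by rewrite (leq_trans hm h1) /= -ltnS (leq_trans h2).
Qed.

Lemma S_pos i : (1 <= n)%N -> (i <= n)%N -> 0 < S i.
Proof.
move=> h1 hi; rewrite /S; apply: ltr_pwDl; last exact: sum_ge0.
by rewrite divr_gt0 // Fpos // h1.
Qed.

Lemma US i : (1 <= n)%N -> (i <= n)%N -> Useq F i * S i = i%:R.
Proof. by move=> h1 hi; rewrite /Useq divfK // gt_eqF // S_pos. Qed.

Lemma S_rec i : (1 <= i)%N -> S i.+1 = S i + (F i.+1)^-1.
Proof. by move=> hi; rewrite /S big_nat_recr //= addrA. Qed.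

End H.
Arguments US {R F n} Fpos {i}. Arguments sum_ge0 {R F n} Fpos {m i}. Arguments S_pos {R F n} Fpos {i}. Arguments S_rec {R F i}. Arguments S {R}.

Theorem lemma8 (R : realFieldType) (n : nat) (F : nat -> R) (u v : nat) :
  (2 <= n)%N ->
  (forall k, (1 <= k <= n)%N -> 0 < F k) ->
  (forall k, (3 <= k <= n.-1)%N -> F k.+1 <= F k) ->
  least_argmax (Useq F) n u ->
  least_argmax (Vseq F) n v ->
  Vseq F v <= Useq F u ->
  [/\ (forall k, (1 <= k <= n)%N -> 0 <= mu F u k),
      [/\ F 1%N * (1 / 2 - mu F u 1) = Useq F u,
          F 2%N * (1 / 2 + 3 * mu F u 1 + \sum_(3 <= i < u.+1) mu F u i) = Useq F u &
          (forall k, (3 <= k <= u)%N -> F k * (1 - mu F u k) = Useq F u)] &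
      (forall k, (u.+1 <= k <= n)%N -> F k <= Useq F u)].
Proof.
move=> hn Fpos Fmono [/andP[hu2 hun] Umax Uleast] [/andP[hv2 hvn] Vmax _] hVU.
have hn1 : (1 <= n)%N by apply: leq_trans hn.
have mono : forall j k, (3 <= j)%N -> (j <= k)%N -> (k <= n)%N -> F k <= F j.
  move=> j k hj; elim: k => [|k IH]; first by rewrite leqn0 => /eqP->; lra.
  rewrite leq_eqVlt => /orP[/eqP->|]; first by lra.
  rewrite ltnS => hjk hk; apply: le_trans (IH hjk (ltnW hk)).
  apply: Fmono; rewrite (leq_trans hj hjk) /=; move: hk; case: (n) => //.
set U := Useq F u.
have F1 : 0 < F 1%N by rewrite Fpos // hn1.
have F2 : 0 < F 2%N by rewrite Fpos // hn.
have hUS := US Fpos hn1 hun.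
have hSpos := S_pos Fpos hn1 hun.
have hUltF : forall k, (3 <= k <= u)%N -> U < F k.
  move=> k /andP[hk3 hku].
  destruct u as [|w]; first by [].
  have hwn := hun.
  have hw2 : (2 <= w)%N by apply: leq_trans hk3 hku.
  have hlt : Useq F w < U by apply: Uleast; rewrite hw2 ltnSn.
  have hUS' := US Fpos hn1 (ltnW hwn).
  rewrite S_rec in hUS hSpos; last by apply: leq_trans hw2.
  have Fw : 0 < F w.+1 by rewrite Fpos // hwn.
  have : U * (F w.+1)^-1 < 1.
    rewrite -/U -natr1 in hUS; rewrite -hUS' in hUS.
    have hS'pos := S_pos Fpos hn1 (ltnW hwn).
    nra.
  move=> h; apply: lt_le_trans (mono _ _ hk3 hku hwn).
  have : U = U * (F w.+1)^-1 * F w.+1 by rewrite -mulrA mulVf ?mulr1 // gt_eqF.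
  move=> ->; nra.
split.
- move=> k /andP[hk1 hkn]; rewrite /mu.
  case: eqP => [_|_].
    have hVu : Vseq F u <= U by apply: le_trans hVU; apply: Vmax; rewrite hu2 hun.
    have hB := sum_ge0 Fpos hun (isT : (1 <= 2)%N).
    have hT : \sum_(1 <= k < u.+1) (F k)^-1 = (F 1%N)^-1 + \sum_(2 <= k < u.+1) (F k)^-1.
      by rewrite big_ltn // ltnS ltnW.
    have hTpos : 0 < \sum_(1 <= k < u.+1) (F k)^-1.
      by rewrite hT ltr_pwDl // invr_gt0.
    have hVT : Vseq F u * \sum_(1 <= k < u.+1) (F k)^-1 = (u.-1)%:R.
      by rewrite /Vseq divfK // gt_eqF.
    have hu : (u.-1)%:R + 1 = u%:R :> R by rewrite natr1 prednK // ltnW.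
    have := ler_wpM2r (ltW hTpos) hVu; rewrite hVT hT.
    move: hUS; rewrite /S -/U => hUS.
    set a := (F 1%N)^-1; set B := \sum_(2 <= k < u.+1) (F k)^-1.
    move: hUS; rewrite -hu mulrDr (mulrDr U a B) /a.
    rewrite -[3 / F 1%N]/(3 * a) mulrA -/B /a. lra.
  case: ifP => // hk; rewrite subr_ge0 ler_pdivrMr; last by rewrite Fpos // hk1 hkn.
  by rewrite mul1r ltW // hUltF.
- split.
  + rewrite /mu /= -/U; field; by rewrite lt0r_neq0.
  + have hsum : \sum_(3 <= i < u.+1) mu F u i = \sum_(3 <= i < u.+1) (1 - U * (F i)^-1).
      apply: eq_big_nat => i /andP[h1 h2]; rewrite /mu.
      rewrite ifF; last by apply/eqP => hi; rewrite hi in h1.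
      rewrite ltnS in h2; by rewrite h1 h2.
    rewrite hsum sumrB sumr_const_nat -mulr_sumr subSS natrB // /mu /= -/U.
    move: hUS; rewrite /S (big_ltn (m:=2)) // -/U.
    set A := \sum_(3 <= i < u.+1) (F i)^-1 => hUS.
    have hA : U * A = u%:R - U * (3 / F 1%N) - U * (F 2%N)^-1.
      by rewrite -hUS; ring.
    rewrite hA; field; by rewrite !lt0r_neq0.
  + move=> k hk; rewrite /mu; case: eqP => [hk1|_]; first by move: hk; rewrite hk1.
    rewrite hk -/U; have : F k != 0.
      by rewrite gt_eqF // Fpos //; case/andP: hk => h1 h2; rewrite (leq_trans _ h1) //= (leq_trans h2).
    move=> hF; field; exact: hF.
- move=> k /andP[hk hkn].
  apply: le_trans (mono _ _ _ hk hkn) _; first exact: hu2.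
  have hu1n : (u.+1 <= n)%N by apply: leq_trans hkn.
  have := Umax u.+1; rewrite hu1n andbT (leq_trans hu2) // => /(_ isT) hle.
  have hUS' := US Fpos hn1 hu1n.
  rewrite S_rec in hUS'; last by apply: leq_trans hu2.
  have Fw : 0 < F u.+1 by rewrite Fpos.
  have : 1 <= U * (F u.+1)^-1.
    rewrite -natr1 -hUS in hUS'.
    have hS1 : 0 <= S F u + (F u.+1)^-1.
      by rewrite addr_ge0 ?ltW ?invr_gt0.
    have := ler_wpM2r hS1 hle; rewrite hUS' (mulrDr (Useq F u) (S F u)) -/U; lra.
  move=> h; have := ler_wpM2l (ltW Fw) h.
  by rewrite mulr1 mulrC divfK // gt_eqF.
Qed.
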